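(* Let $\mu$ and $\lambda$ be constants, and let $r_\mu:=1/\sqrt{-\mu}$ if $\mu<0$ and $r_\mu:=+\infty$ if $\mu\ge 0$. Then the Randers metric $$F(x,y)=\frac{\sqrt[4]{1+(\mu+\lambda^2)|x|^2}\,\sqrt{(1+\mu|x|^2)|y|^2-\mu\langle x,y\rangle^2}}{1+\mu|x|^2}+\frac{\lambda\langle x,y\rangle}{(1+\mu|x|^2)\sqrt[4]{1+(\mu+\lambda^2)|x|^2}}$$ is dually flat on the ball $\mathbb{B}^n(r_\mu)=\{x\in\mathbb{R}^n:|x|<r_\mu\}$.
   Context: $|\cdot|$ and $\langle\cdot,\cdot\rangle$ are the Euclidean norm and inner product on $\mathbb{R}^n$; $x$ is the point and $y$ the tangent vector. A Finsler metric $F$ on an open set $U\subseteq\mathbb{R}^n$ is called dually flat if $[F^2]_{x^ky^l}y^k-2[F^2]_{x^l}=0$ on $U$. *)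

(* Defs.v *)
From HB Require Import structures.
From mathcomp Require Import all_boot all_order all_algebra.
From mathcomp Require Import all_classical all_reals all_analysis.
Set Implicit Arguments. Unset Strict Implicit. Unset Printing Implicit Defensive.
Import Order.TTheory GRing.Theory Num.Theory.
Import numFieldNormedType.Exports.
Local Open Scope ring_scope.
Local Open Scope classical_set_scope.

Section Defs.
Variables (R : realType) (n : nat).

Definition edot (x y : 'rV[R]_n) : R := \sum_(i < n) x 0 i * y 0 i.
Definition enorm2 (x : 'rV[R]_n) : R := edot x x.
Definition enorm (x : 'rV[R]_n) : R := Num.sqrt (enorm2 x).

Definition ebasis (k : 'I_n) : 'rV[R]_n := delta_mx 0 k.

Definition Fsq (F : 'rV[R]_n -> 'rV[R]_n -> R) (x y : 'rV[R]_n) : R := F x y ^+ 2.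
Definition Fsq_x F (k : 'I_n) (x y : 'rV[R]_n) : R :=
  'D_(ebasis k) (fun x' => Fsq F x' y) x.
Definition Fsq_xy F (k l : 'I_n) (x y : 'rV[R]_n) : R :=
  'D_(ebasis l) (fun y' => Fsq_x F k x y') y.

Definition dually_flat (U : set 'rV[R]_n) (F : 'rV[R]_n -> 'rV[R]_n -> R) : Prop :=
  forall x y, U x -> y != 0 ->
    (forall k, derivable (fun x' => Fsq F x' y) x (ebasis k)) /\
    (forall k l, derivable (fun y' => Fsq_x F k x y') y (ebasis l)) /\
    (forall l, \sum_(k < n) Fsq_xy F k l x y * y 0 k - 2 * Fsq_x F l x y = 0).

(* The ball B^n(r_mu), r_mu = 1/sqrt(-mu) if mu < 0, +oo otherwise *)
Definition ball_rmu (mu : R) : set 'rV[R]_n :=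
  [set x | mu < 0 -> enorm x < 1 / Num.sqrt (- mu)].

Definition randers_F (mu lam : R) (x y : 'rV[R]_n) : R :=
  let q := Num.sqrt (Num.sqrt (1 + (mu + lam ^+ 2) * enorm2 x)) in
  let d := 1 + mu * enorm2 x in
  q * Num.sqrt (d * enorm2 y - mu * edot x y ^+ 2) / d
  + lam * edot x y / (d * q).

End Defs.

(* Main.v *)
Require Import Defs.
From HB Require Import structures.
From mathcomp Require Import all_boot all_order all_algebra.
From mathcomp Require Import all_classical all_reals all_analysis.
From mathcomp Require Import ring lra.
Import Order.TTheory GRing.Theory Num.Theory.
Import numFieldNormedType.Exports.
Local Open Scope ring_scope.

Set Implicit Arguments. Unset Strict Implicit.

Section W.
Context {R : realType} {V : normedModType R}.
Implicit Types (f g : V -> R).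

Lemma derive_transfer f x v :
  'D_v f x = 'D_(1:R) (fun h : R => f (h *: v + x)) (0:R).
Proof.
rewrite /derive; congr (lim _).
set g1 := fun h => h^-1 *: _; set g2 := fun h => h^-1 *: _.
suff -> : g1 = g2 by [].
by rewrite funeqE /g1 /g2 => h /=; rewrite addr0 scale0r add0r [_%:A]mulr1.
Qed.

Lemma is_derive_transfer f x v df :
  is_derive x v f df <-> is_derive (0:R) (1:R) (fun h : R => f (h *: v + x)) df.
Proof.
split=> -[d1 d2].
  apply: DeriveDef; first exact: (proj1 (derivable1P f x v) d1).
  by rewrite -derive_transfer.
by apply: DeriveDef; [exact: (proj2 (derivable1P f x v) d1) | rewrite derive_transfer].
Qed.

Lemma dchain f (g : R -> R) x v df dg :
  is_derive x v f df -> is_derive (f x) 1 g dg ->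
  is_derive x v (fun z => g (f z)) (dg * df).
Proof.
move=> /is_derive_transfer Hf Hg; apply/is_derive_transfer.
have Hg' : is_derive ((fun h : R => f (h *: v + x)) 0) 1 g dg.
  by rewrite /= scale0r add0r.
exact: (@is_derive1_comp R g (fun h : R => f (h *: v + x)) 0 dg df Hg' Hf).
Qed.

Lemma dsqrt f x v df : is_derive x v f df -> 0 < f x ->
  is_derive x v (fun z => Num.sqrt (f z)) (df / (2 * Num.sqrt (f x))).
Proof.
move=> Hf fx0; rewrite mulrC; apply: dchain => //; exact: is_derive1_sqrt.
Qed.

Lemma dM f g x v df dg : is_derive x v f df -> is_derive x v g dg ->
  is_derive x v (fun z => f z * g z) (f x * dg + g x * df).
Proof. move=> Hf Hg; exact: (is_deriveM Hf Hg). Qed.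

Lemma dD f g x v df dg : is_derive x v f df -> is_derive x v g dg ->
  is_derive x v (fun z => f z + g z) (df + dg).
Proof. move=> Hf Hg; exact: (is_deriveD Hf Hg). Qed.

Lemma dB f g x v df dg : is_derive x v f df -> is_derive x v g dg ->
  is_derive x v (fun z => f z - g z) (df - dg).
Proof. move=> Hf Hg; exact: (is_deriveB Hf Hg). Qed.

Lemma dC (a : R) x v : is_derive x v (fun _ : V => a) 0.
Proof. exact: is_derive_cst. Qed.

Lemma dV f x v df : is_derive x v f df -> f x != 0 ->
  is_derive x v (fun z => (f z)^-1) (- df / (f x ^+ 2)).
Proof.
move=> [Hd Hv] fx0; apply: DeriveDef; first exact: derivableV.
rewrite deriveV // Hv.
by change (- (f x ^- 2) * df = - df / f x ^+ 2); rewrite !mulNr mulrC.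
Qed.

Lemma dN f x v df : is_derive x v f df ->
  is_derive x v (fun z => - f z) (- df).
Proof. move=> Hf; exact: (is_deriveN Hf). Qed.

End W.


Section E.
Context {R : realType} {n : nat}.
Notation V := ('rV[R]_n).
Implicit Types (x y v : V).

Lemma edotC x y : edot x y = edot y x.
Proof. by rewrite /edot; apply: eq_bigr => i _; rewrite mulrC. Qed.

Lemma edot_affl (h : R) v x y : edot (h *: v + x) y = h * edot v y + edot x y.
Proof.
rewrite /edot mulr_sumr -big_split /=; apply: eq_bigr => i _.
by rewrite !mxE mulrDl mulrA.
Qed.

Lemma d1_quad (a b c : R) :
  is_derive (0:R) (1:R) (fun h : R => a * (h * h) + b * h + c) b.
Proof.
apply: is_derive_eq.
by rewrite !scale0r !addr0 scaler0 add0r; exact: mulr1.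
Qed.

Lemma d_edotl x v y : is_derive x v (fun z => edot z y) (edot v y).
Proof.
apply/is_derive_transfer; apply: is_derive_eq.
  have -> : (fun h : R => edot (h *: v + x) y) = (fun h => 0 * (h * h) + edot v y * h + edot x y).
    by apply/funext => h; rewrite edot_affl mul0r add0r mulrC.
  exact: d1_quad.
by [].
Qed.

Lemma d_edotr x v y : is_derive y v (fun z => edot x z) (edot x v).
Proof.
have -> : (fun z => edot x z) = (fun z => edot z x) by apply/funext => z; rewrite edotC.
by rewrite edotC; exact: d_edotl.
Qed.

Lemma d_enorm2 x v : is_derive x v (fun z => enorm2 z) (2 * edot x v).
Proof.
apply/is_derive_transfer.
have -> : (fun h : R => enorm2 (h *: v + x)) =
   (fun h => edot v v * (h * h) + 2 * edot x v * h + edot x x).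
  apply/funext => h; rewrite /enorm2 edot_affl ![edot _ (_ *: _ + _)]edotC !edot_affl (edotC v x).
  ring.
exact: d1_quad.
Qed.

End E.

Section E2.
Context {R : realType} {n : nat}.
Notation V := ('rV[R]_n).
Lemma edot_ebasisr (x : V) k : edot x (@ebasis R n k) = x 0 k.
Proof.
rewrite /edot (bigD1 k) //= big1 => [|i ik]; rewrite /ebasis !mxE ?eqxx /=.
  by rewrite mulr1 addr0.
by rewrite (negbTE ik) mulr0.
Qed.
Lemma edot_ebasisl (x : V) k : edot (@ebasis R n k) x = x 0 k.
Proof. by rewrite edotC edot_ebasisr. Qed.
End E2.


Lemma key (R : realFieldType) (a a1 b b1 d mu A t u xl yl : R) :
  A != 0 -> a != 0 -> d != 0 ->
  A ^+ 2 = d * u - mu * t ^+ 2 ->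
  4 * a * a1 * d + 3 * a ^+ 2 * mu - b ^+ 2 = 0 ->
  a1 * b * d + a * b1 * d + 2 * a * b * mu = 0 ->
  let dt := xl in let du := 2 * yl in
  let Fy := a * A + b * t in
  let Ps := a1 * A + a * mu * u / (2 * A) + b1 * t in
  let Pt := - (a * mu * t / A) + b in
  let dA := (d * du - mu * (2 * t * dt)) / (2 * A) in
  let dF := a * dA + b * dt in
  let dPs := a1 * dA + a * mu * du / (2 * A) - a * mu * u * dA / (2 * A ^+ 2) + b1 * dt in
  let dPt := - (a * mu * dt / A) + a * mu * t * dA / A ^+ 2 in
  (2 * dF * (2 * Ps) + 2 * Fy * (2 * dPs)) * t + (2 * dF * Pt + 2 * Fy * dPt) * u
   + 2 * Fy * Pt * yl - 2 * (2 * Fy * (Ps * (2 * xl) + Pt * yl)) = 0.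
Proof.
move=> A0 a0 d0 hA h1 h2 dt du Fy Ps Pt dA dF dPs dPt.
have hu : u = (A ^+ 2 + mu * t ^+ 2) / d by rewrite hA; field.
have hb1 : b1 = - (a1 * b * d + 2 * a * b * mu) / (a * d).
  have e : b1 * (a * d) = - (a1 * b * d + 2 * a * b * mu).
    by apply/eqP; rewrite -subr_eq0; apply/eqP; rewrite -[RHS]h2; ring.
  by rewrite -e mulfK // mulf_neq0.
have ha1 : a1 = (b ^+ 2 - 3 * a ^+ 2 * mu) / (4 * a * d).
  have e : a1 * (4 * a * d) = b ^+ 2 - 3 * a ^+ 2 * mu.
    by apply/eqP; rewrite -subr_eq0; apply/eqP; rewrite -[RHS]h1; ring.
  have h4 : (4:R) != 0 by apply: lt0r_neq0; lra.
  by rewrite -e mulfK // !mulf_neq0.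
rewrite /dPs /dPt /dF /dA /Ps /Pt /Fy /du /dt.
rewrite hb1 ha1 hu.
field.
have h4 : (4:R) != 0 by apply: lt0r_neq0; lra.
have h2' : (2:R) != 0 by apply: lt0r_neq0; lra.
by rewrite A0 d0 a0 /=.
Qed.


Section M.
Context {R : realType} {n : nat} (mu lam : R).
Notation V := ('rV[R]_n).

Definition cc := mu + lam ^+ 2.
Definition dd (s : R) := 1 + mu * s.
Definition ww (s : R) := 1 + cc * s.
Definition PP s := Num.sqrt (ww s).
Definition QQ s := Num.sqrt (PP s).
Definition al s := QQ s / dd s.
Definition be s := lam / (dd s * QQ s).
Definition Q1 s := cc / (2 * PP s) / (2 * QQ s).
Definition al1 s := Q1 s / dd s - QQ s * mu / dd s ^+ 2.
Definition be1 s := - (lam * (mu * QQ s + dd s * Q1 s)) / (dd s * QQ s) ^+ 2.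

Lemma d_QQ s0 : 0 < ww s0 -> is_derive s0 (1:R) QQ (Q1 s0).
Proof.
move=> w0.
have hw : is_derive s0 (1:R) ww cc.
  apply: (is_derive_eq (dD (dC 1 _ _) (dM (dC cc _ _) (is_derive_id s0 1)))).
  by rewrite /= mulr1 mulr0 addr0 add0r.
have P0 : 0 < PP s0 by rewrite /PP sqrtr_gt0.
have hP := dsqrt hw w0.
apply: (is_derive_eq (dsqrt hP P0)).
by rewrite /Q1 /PP.
Qed.

Lemma d_al s0 : 0 < ww s0 -> dd s0 != 0 -> is_derive s0 (1:R) al (al1 s0).
Proof.
move=> w0 d0.
have hd : is_derive s0 (1:R) dd mu.
  apply: (is_derive_eq (dD (dC 1 _ _) (dM (dC mu _ _) (is_derive_id s0 1)))).
  by rewrite /= mulr1 mulr0 addr0 add0r.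
rewrite [X in is_derive _ _ X]/al.
apply: (is_derive_eq (dM (d_QQ w0) (dV hd d0))).
rewrite /al1; field; exact: d0.
Qed.

Lemma d_be s0 : 0 < ww s0 -> dd s0 != 0 -> is_derive s0 (1:R) be (be1 s0).
Proof.
move=> w0 d0.
have hd : is_derive s0 (1:R) dd mu.
  apply: (is_derive_eq (dD (dC 1 _ _) (dM (dC mu _ _) (is_derive_id s0 1)))).
  by rewrite /= mulr1 mulr0 addr0 add0r.
have Q0 : 0 < QQ s0 by rewrite /QQ sqrtr_gt0 /PP sqrtr_gt0.
have dQ0 : dd s0 * QQ s0 != 0 by rewrite mulf_neq0 // gt_eqF.
rewrite [X in is_derive _ _ X]/be.
apply: (is_derive_eq (dM (dC lam _ _) (dV (dM hd (d_QQ w0)) dQ0))).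
rewrite /be1 /=; field; by rewrite d0 gt_eqF.
Qed.


Lemma PP_sq s : 0 < ww s -> PP s = QQ s ^+ 2.
Proof. by move=> w0; rewrite /QQ sqr_sqrtr // /PP sqrtr_ge0. Qed.

Lemma QQ4 s : 0 < ww s -> QQ s ^+ 4 = ww s.
Proof.
move=> w0; rewrite (_ : 4 = 2 * 2)%N // exprM -PP_sq // /PP sqr_sqrtr //.
exact: ltW.
Qed.

Lemma QQ_gt0 s : 0 < ww s -> 0 < QQ s.
Proof. by move=> w0; rewrite /QQ sqrtr_gt0 /PP sqrtr_gt0. Qed.

Lemma C1 s : 0 < ww s -> dd s != 0 ->
  4 * al s * al1 s * dd s + 3 * al s ^+ 2 * mu - be s ^+ 2 = 0.
Proof.
move=> w0 d0; have Q0 : QQ s != 0 by apply: lt0r_neq0; exact: QQ_gt0.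
have h4 := QQ4 w0.
rewrite /al /al1 /be /Q1 (PP_sq w0).
apply: (@eq_trans _ _ ((cc * dd s - QQ s ^+ 4 * mu - lam ^+ 2) / (dd s ^+ 2 * QQ s ^+ 2))).
  by field; rewrite d0 Q0.
rewrite h4 /ww /dd /cc.
rewrite (_ : _ - _ - _ = 0) ?mul0r //; ring.
Qed.

Lemma C2 s : 0 < ww s -> dd s != 0 ->
  al1 s * be s * dd s + al s * be1 s * dd s + 2 * al s * be s * mu = 0.
Proof.
move=> w0 d0; have Q0 : QQ s != 0 by apply: lt0r_neq0; exact: QQ_gt0.
rewrite /al /al1 /be /be1; field; by rewrite d0 Q0.
Qed.

Definition AA (x y : V) := Num.sqrt (dd (enorm2 x) * enorm2 y - mu * edot x y ^+ 2).

Lemma Feq (x y : V) :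
  randers_F mu lam x y = al (enorm2 x) * AA x y + be (enorm2 x) * edot x y.
Proof. rewrite /randers_F /al /be /AA /QQ /PP /ww /dd /cc /=; ring. Qed.


Lemma edotZl (h : R) (x y : V) : edot (h *: x) y = h * edot x y.
Proof. by rewrite /edot mulr_sumr; apply: eq_bigr => i _; rewrite !mxE mulrA. Qed.

Lemma edotDl (x x' y : V) : edot (x + x') y = edot x y + edot x' y.
Proof. by rewrite /edot -big_split; apply: eq_bigr => i _; rewrite !mxE mulrDl. Qed.

Lemma enorm2_ge0 (x : V) : 0 <= enorm2 x.
Proof. by apply: sumr_ge0 => i _; rewrite -expr2 sqr_ge0. Qed.

Lemma enorm2_gt0 (y : V) : y != 0 -> 0 < enorm2 y.
Proof.
move=> y0; rewrite lt_def enorm2_ge0 andbT; apply: contra y0 => /eqP h.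
have H0 := psumr_eq0P _ h.
apply/eqP/matrixP => i j; rewrite ord1 mxE.
have : y 0 j * y 0 j = 0 by apply: H0 => // k _; rewrite -expr2 sqr_ge0.
by move/eqP; rewrite mulf_eq0 orbb => /eqP.
Qed.

Lemma CS (x y : V) : edot x y ^+ 2 <= enorm2 x * enorm2 y.
Proof.
have [y0|y0] := eqVneq y 0.
  have e1 : edot x y = 0 by rewrite /edot big1 // => i _; rewrite y0 mxE mulr0.
  have e2 : enorm2 y = 0 by rewrite /enorm2 /edot big1 // => i _; rewrite y0 mxE mulr0.
  by rewrite e1 e2 mulr0 expr0n.
have u0 := enorm2_gt0 y0.
have h := enorm2_ge0 (enorm2 y *: x + (- edot x y) *: y).
move: h; rewrite /enorm2 !edotDl !edotZl ![edot _ (_ + _)]edotC !edotDl !edotZl.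
rewrite (edotC y x) => h.
have : 0 <= enorm2 y * (enorm2 x * enorm2 y - edot x y ^+ 2).
  by move: h; rewrite /enorm2; congr (_ <= _); ring.
by rewrite pmulr_rge0 // subr_ge0.
Qed.

Lemma ball_dd (x : V) : ball_rmu mu x -> 0 < dd (enorm2 x).
Proof.
rewrite /ball_rmu /= /dd => hb.
have s0 := enorm2_ge0 x.
have [mu0|mu0] := ltP mu 0; last first.
  by apply: (@lt_le_trans _ _ 1) => //; rewrite lerDl mulr_ge0.
have := hb mu0; rewrite /enorm.
have m0 : 0 < Num.sqrt (- mu) by rewrite sqrtr_gt0 oppr_gt0.
rewrite ltr_pdivlMr // -sqrtrM // -sqrtr1 ltr_sqrt // => h.
by move: h; rewrite mulrN mulrC sqrtr1 => h; lra.
Qed.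

Lemma ball_ww (x : V) : ball_rmu mu x -> 0 < ww (enorm2 x).
Proof.
move=> hb; have := ball_dd hb; rewrite /ww /dd /cc => h.
have := enorm2_ge0 x; have := sqr_ge0 lam => h1 h2.
have : 0 <= lam ^+ 2 * enorm2 x by rewrite mulr_ge0.
lra.
Qed.

Lemma ball_z (x y : V) : ball_rmu mu x -> y != 0 ->
  0 < dd (enorm2 x) * enorm2 y - mu * edot x y ^+ 2.
Proof.
move=> hb y0; have d0 := ball_dd hb; have u0 := enorm2_gt0 y0.
have cs := CS x y; have t0 := sqr_ge0 (edot x y).
have [mu0|mu0] := ltP mu 0.
  have : 0 < dd (enorm2 x) * enorm2 y by rewrite mulr_gt0.
  have : 0 <= - mu * edot x y ^+ 2 by rewrite mulr_ge0 // oppr_ge0 ltW.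
  lra.
have : 0 <= mu * (enorm2 x * enorm2 y - edot x y ^+ 2) by rewrite mulr_ge0 // subr_ge0.
rewrite /dd; lra.
Qed.

End M.


Section X.
Context {R : realType} {n : nat} (mu lam : R).
Notation V := ('rV[R]_n).

Definition PhiS (x y : V) := al1 mu lam (enorm2 x) * AA mu x y
  + al mu lam (enorm2 x) * mu * enorm2 y / (2 * AA mu x y) + be1 mu lam (enorm2 x) * edot x y.
Definition PhiT (x y : V) := - (al mu lam (enorm2 x) * mu * edot x y / AA mu x y) + be mu lam (enorm2 x).

Lemma AA_gt0 (x y : V) : ball_rmu mu x -> y != 0 -> 0 < AA mu x y.
Proof. by move=> hb y0; rewrite /AA sqrtr_gt0 ball_z. Qed.

Lemma dFx (x y v : V) : ball_rmu mu x -> y != 0 ->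
  is_derive x v (fun z => randers_F mu lam z y)
    (PhiS x y * (2 * edot x v) + PhiT x y * edot v y).
Proof.
move=> hb y0.
have w0 := ball_ww lam hb; have d0 := ball_dd hb; have z0 := ball_z hb y0.
have A0 : AA mu x y != 0 by apply: lt0r_neq0; exact: AA_gt0.
have hs := d_enorm2 x v.
have hal := dchain hs (d_al w0 (lt0r_neq0 d0)).
have hbe := dchain hs (d_be w0 (lt0r_neq0 d0)).
have ht := d_edotl x v y.
have hz : is_derive x v (fun z => dd mu (enorm2 z) * enorm2 y - mu * edot z y ^+ 2)
   (mu * (2 * edot x v) * enorm2 y - mu * (2 * edot x y * edot v y)).
  apply: (is_derive_eq (dB (dM (dD (dC 1 _ _) (dM (dC mu _ _) hs)) (dC (enorm2 y) _ _))
     (dM (dC mu _ _) (dM ht ht)))).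
  rewrite /=; ring.
have hA := dsqrt hz z0.
have -> : (fun z => randers_F mu lam z y) =
  (fun z => al mu lam (enorm2 z) * AA mu z y + be mu lam (enorm2 z) * edot z y).
  by apply/funext => z; exact: Feq.
apply: (is_derive_eq (dD (dM hal hA) (dM hbe ht))).
rewrite /= -/(AA mu x y) /PhiS /PhiT.
by field.
Qed.


Definition Fy (x y : V) := al mu lam (enorm2 x) * AA mu x y + be mu lam (enorm2 x) * edot x y.
Definition Hk k (x y : V) := 2 * Fy x y *
  (PhiS x y * (2 * edot x (@ebasis R n k)) + PhiT x y * edot (@ebasis R n k) y).
Definition dA (x y v : V) :=
  (dd mu (enorm2 x) * (2 * edot y v) - mu * (2 * edot x y * edot x v)) / (2 * AA mu x y).
Definition dF (x y v : V) := al mu lam (enorm2 x) * dA x y v + be mu lam (enorm2 x) * edot x v.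
Definition dPs (x y v : V) := al1 mu lam (enorm2 x) * dA x y v
  + al mu lam (enorm2 x) * mu * (2 * edot y v) / (2 * AA mu x y)
  - al mu lam (enorm2 x) * mu * enorm2 y * dA x y v / (2 * AA mu x y ^+ 2)
  + be1 mu lam (enorm2 x) * edot x v.
Definition dPt (x y v : V) := - (al mu lam (enorm2 x) * mu * edot x v / AA mu x y)
  + al mu lam (enorm2 x) * mu * edot x y * dA x y v / AA mu x y ^+ 2.
Definition Hd k (x y v : V) :=
  2 * dF x y v * (PhiS x y * (2 * edot x (@ebasis R n k)) + PhiT x y * edot (@ebasis R n k) y)
  + 2 * Fy x y * (dPs x y v * (2 * edot x (@ebasis R n k)) + dPt x y v * edot (@ebasis R n k) y
     + PhiT x y * edot (@ebasis R n k) v).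

Lemma dFsq (x y v : V) : ball_rmu mu x -> y != 0 ->
  is_derive x v (fun z => Fsq (randers_F mu lam) z y)
    (2 * Fy x y * (PhiS x y * (2 * edot x v) + PhiT x y * edot v y)).
Proof.
move=> hb y0; have H := dFx v hb y0.
apply: (is_derive_eq (dM H H)).
by rewrite /Fy -Feq; ring.
Qed.

Lemma FsqxE k (x : V) : ball_rmu mu x -> Fsq_x (randers_F mu lam) k x = Hk k x.
Proof.
move=> hb; apply/funext => y.
have [->|y0] := eqVneq y 0.
  have e0 : forall z : V, edot z 0 = 0.
    by move=> z; rewrite /edot big1 // => i _; rewrite mxE mulr0.
  have A0 : forall z : V, AA mu z 0 = 0.
    by move=> z; rewrite /AA /enorm2 !e0 expr0n /= !mulr0 subr0 sqrtr0.
  rewrite /Hk /Fy A0 e0 !mulr0 addr0 mulr0 mul0r.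
  rewrite /Fsq_x (_ : (fun x' => Fsq (randers_F mu lam) x' 0) = cst 0).
    exact: derive_cst.
  by apply/funext => z; rewrite /Fsq Feq A0 e0 !mulr0 addr0 expr0n.
rewrite /Fsq_x; have [_ ->] := dFsq (@ebasis R n k) hb y0.
by [].
Qed.


Lemma dH k (x y v : V) : ball_rmu mu x -> y != 0 ->
  is_derive y v (Hk k x) (Hd k x y v).
Proof.
move=> hb y0.
have w0 := ball_ww lam hb; have d0 := ball_dd hb; have z0 := ball_z hb y0.
have A0 : AA mu x y != 0 by apply: lt0r_neq0; exact: AA_gt0.
have A20 : 2 * AA mu x y != 0 by rewrite mulf_neq0 // pnatr_eq0.
set s := enorm2 x.
have hu := d_enorm2 y v.
have ht := d_edotr x v y.
have hz : is_derive y v (fun z => dd mu s * enorm2 z - mu * edot x z ^+ 2)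
   (dd mu s * (2 * edot y v) - mu * (2 * edot x y * edot x v)).
  apply: (is_derive_eq (dB (dM (dC (dd mu s) _ _) hu) (dM (dC mu _ _) (dM ht ht)))).
  rewrite /=; ring.
have hA := dsqrt hz z0.
have hAi := dV hA A0.
have hA2i := dV (dM (dC 2 _ _) hA) A20.
have hF := dD (dM (dC (al mu lam s) _ _) hA) (dM (dC (be mu lam s) _ _) ht).
have hPs := dD (dD (dM (dC (al1 mu lam s) _ _) hA)
   (dM (dM (dC (al mu lam s * mu) _ _) hu) hA2i)) (dM (dC (be1 mu lam s) _ _) ht).
have hPt := dD (dN (dM (dM (dC (al mu lam s * mu) _ _) ht) hAi)) (dC (be mu lam s) _ _).
have hyk := d_edotr (@ebasis R n k) v y.
rewrite /Hk /Fy /PhiS /PhiT.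
apply: (is_derive_eq (dM (dM (dC 2 _ _) hF)
   (dD (dM hPs (dC (2 * edot x (@ebasis R n k)) _ _)) (dM hPt hyk)))).
rewrite /Hd /dF /dPs /dPt /dA /PhiS /PhiT /Fy /= -/(AA mu x y) -/s.
by field.
Qed.

End X.


Theorem theorem1p3 (R : realType) (n : nat) (mu lam : R) :
  @dually_flat R n (@ball_rmu R n mu) (@randers_F R n mu lam).
Proof.
move=> x y hb y0; split; [|split].
- by move=> k; have [H _] := dFsq lam (@ebasis R n k) hb y0.
- move=> k l; rewrite (FsqxE lam k hb).
  by have [H _] := dH lam k (@ebasis R n l) hb y0.
move=> l.
have E1 : forall k, Fsq_xy (randers_F mu lam) k l x y = Hd mu lam k x y (@ebasis R n l).
  move=> k; rewrite /Fsq_xy (FsqxE lam k hb).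
  by have [_ ->] := dH lam k (@ebasis R n l) hb y0.
rewrite (eq_bigr _ (fun k _ => congr1 (fun z => z * y 0 k) (E1 k))).
rewrite /Fsq_x -/(Fsq_x (randers_F mu lam) l x y) (FsqxE lam l hb).
set v := @ebasis R n l.
set X := 2 * dF mu lam x y v * (2 * PhiS mu lam x y) + 2 * Fy mu lam x y * (2 * dPs mu lam x y v).
set Y := 2 * dF mu lam x y v * PhiT mu lam x y + 2 * Fy mu lam x y * dPt mu lam x y v.
set Z := 2 * Fy mu lam x y * PhiT mu lam x y.
have E2 : forall k, Hd mu lam k x y v * y 0 k =
    X * (x 0 k * y 0 k) + Y * (y 0 k * y 0 k) + Z * (v 0 k * y 0 k).
  by move=> k; rewrite /Hd edot_ebasisr !edot_ebasisl /X /Y /Z; ring.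
rewrite (eq_bigr _ (fun k _ => E2 k)) !big_split /= -!mulr_sumr.
rewrite -/(edot x y) -/(edot y y) -/(enorm2 y) -/(edot v y) /v edot_ebasisl.
rewrite /Hk edot_ebasisr edot_ebasisl.
have w0 := ball_ww lam hb; have d0 := ball_dd hb; have z0 := ball_z hb y0.
have A0 : AA mu x y != 0 by apply: lt0r_neq0; exact: AA_gt0.
have a0 : al mu lam (enorm2 x) != 0.
  by rewrite /al mulf_neq0 ?invr_eq0 ?lt0r_neq0 // QQ_gt0.
have hA2 : AA mu x y ^+ 2 = dd mu (enorm2 x) * enorm2 y - mu * edot x y ^+ 2.
  by rewrite /AA sqr_sqrtr // ltW.
have K := @key R (al mu lam (enorm2 x)) (al1 mu lam (enorm2 x)) (be mu lam (enorm2 x))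
  (be1 mu lam (enorm2 x)) (dd mu (enorm2 x)) mu (AA mu x y) (edot x y) (enorm2 y) (x 0 l) (y 0 l) A0 a0 (lt0r_neq0 d0) hA2
   (C1 w0 (lt0r_neq0 d0)) (C2 w0 (lt0r_neq0 d0)).
rewrite /X /Y /Z /dF /dPs /dPt /dA /v !edot_ebasisr.
exact: K.
Qed.
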